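(* Let $n\ge1$, $t_1<\dots<t_n$, $p_0,\dots,p_n>0$, $q_k=p_k^{-1/2}$, and let $a_k^\pm,b_k^\pm$ ($0\le k\le n$) be the connection coefficients defined in the context. Then: (i) For $z\in\mathbb{C}\setminus(-\infty,0]$ and all $1\le k\le n-1$, $$\frac{a_0^+(z)}{q_0}=\frac{1}{q_k}\big(a_k^+(z)b_k^-(z)-a_k^-(z)b_k^+(z)\big)=\frac{b_n^-(z)}{q_n}.$$ (ii) For $\lambda\in(0,\infty)$ and all $0\le k\le n$, $$q_0\big(|b_k^-(\lambda)|^2-|a_k^-(\lambda)|^2\big)=q_n\big(|a_k^+(\lambda)|^2-|b_k^+(\lambda)|^2\big)=q_k,$$ and consequently $$\frac{|a_k^+(\lambda)|^2}{q_0}+\frac{|a_k^-(\lambda)|^2}{q_n}=\frac{|b_k^+(\lambda)|^2}{q_0}+\frac{|b_k^-(\lambda)|^2}{q_n}.$$ (iii) For $\lambda\in(0,\infty)$ and all $1\le k\le n-1$, $$\frac{b_0^+(\lambda)}{q_0}=\frac{1}{q_k}\Big(b_k^+(\lambda)\overline{b_k^-(\lambda)}-a_k^+(\lambda)\overline{a_k^-(\lambda)}\Big)=-\frac{\overline{a_n^-(\lambda)}}{q_n}.$$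
   Context: For $z\in\mathbb{C}\setminus(-\infty,0]$, $\sqrt z$ is the principal square root. For $1\le k\le n$ let $$L_k(z)=\frac12\begin{bmatrix}\left(1+\frac{q_k}{q_{k-1}}\right)e^{it_k(q_{k-1}-q_k)\sqrt z} & \left(1-\frac{q_k}{q_{k-1}}\right)e^{-it_k(q_{k-1}+q_k)\sqrt z}\\ \left(1-\frac{q_k}{q_{k-1}}\right)e^{it_k(q_{k-1}+q_k)\sqrt z} & \left(1+\frac{q_k}{q_{k-1}}\right)e^{-it_k(q_{k-1}-q_k)\sqrt z}\end{bmatrix},\qquad R_k(z)=L_k(z)^{-1}.$$ The connection coefficients are defined by $a_n^+=1$, $b_n^+=0$, $(a_l^+,b_l^+)^T=R_{l+1}(z)(a_{l+1}^+,b_{l+1}^+)^T$ for $l=n-1,\dots,0$; and $a_0^-=0$, $b_0^-=1$, $(a_j^-,b_j^-)^T=L_j(z)(a_{j-1}^-,b_{j-1}^-)^T$ for $j=1,\dots,n$. *)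

(* Defs.v *)
From Stdlib Require Import Reals Lra.
From Coquelicot Require Import Coquelicot.
Open Scope R_scope.

Definition Cexp (z : C) : C :=
  (exp (Re z) * cos (Im z), exp (Re z) * sin (Im z)).

(* Principal square root (branch cut on (-oo,0], Re >= 0):
   sqrt z = sqrt((|z|+Re z)/2) + i sgn(Im z) sqrt((|z|-Re z)/2),
   with sgn(Im z) taken as +1 when Im z >= 0. *)
Definition Csqrt (z : C) : C :=
  (sqrt ((Cmod z + Re z) / 2),
   (if Rlt_dec (Im z) 0 then -1 else 1) * sqrt ((Cmod z - Re z) / 2)).

Definition not_neg_real (z : C) : Prop := ~ (Im z = 0 /\ Re z <= 0).

Record mat2 := Mat2 { m11 : C; m12 : C; m21 : C; m22 : C }.
Definition mat2_apply (M : mat2) (v : C * C) : C * C :=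
  ((m11 M * fst v + m12 M * snd v)%C, (m21 M * fst v + m22 M * snd v)%C).
Definition mat2_det (M : mat2) : C := (m11 M * m22 M - m12 M * m21 M)%C.
Definition mat2_inv (M : mat2) : mat2 :=
  let d := mat2_det M in
  Mat2 (m22 M / d)%C (- m12 M / d)%C (- m21 M / d)%C (m11 M / d)%C.

Definition Ci : C := (0, 1).

Definition qq (p : nat -> R) (k : nat) : R := / sqrt (p k).

Definition Lmat (t p : nat -> R) (k : nat) (z : C) : mat2 :=
  let qk1 := qq p (k - 1) in
  let qk := qq p k in
  let r := qk / qk1 in
  let s := Csqrt z in
  Mat2 (/2 * (1 + r) * Cexp (Ci * t k * (qk1 - qk) * s))%C
       (/2 * (1 - r) * Cexp (- Ci * t k * (qk1 + qk) * s))%C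
       (/2 * (1 - r) * Cexp (Ci * t k * (qk1 + qk) * s))%C
       (/2 * (1 + r) * Cexp (- Ci * t k * (qk1 - qk) * s))%C.

Definition Rmat (t p : nat -> R) (k : nat) (z : C) : mat2 :=
  mat2_inv (Lmat t p k z).

(* plus_vec n m = (a_{n-m}^+, b_{n-m}^+) for m <= n *)
Fixpoint plus_vec (t p : nat -> R) (n : nat) (z : C) (m : nat) : C * C :=
  match m with
  | O => (RtoC 1, RtoC 0)
  | S m' => mat2_apply (Rmat t p (n - m') z) (plus_vec t p n z m')
  end.

Fixpoint minus_vec (t p : nat -> R) (z : C) (j : nat) : C * C :=
  match j with
  | O => (RtoC 0, RtoC 1)
  | S j' => mat2_apply (Lmat t p j z) (minus_vec t p z j')
  end.

Definition a_plus (t p : nat -> R) (n : nat) (z : C) (l : nat) : C :=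
  fst (plus_vec t p n z (n - l)).
Definition b_plus (t p : nat -> R) (n : nat) (z : C) (l : nat) : C :=
  snd (plus_vec t p n z (n - l)).
Definition a_minus (t p : nat -> R) (z : C) (j : nat) : C :=
  fst (minus_vec t p z j).
Definition b_minus (t p : nat -> R) (z : C) (j : nat) : C :=
  snd (minus_vec t p z j).

(* Main.v *)
Require Import Defs.
From Stdlib Require Import Reals Lra Lia.
From Coquelicot Require Import Coquelicot.
Open Scope R_scope.

Lemma Cexp_opp_mul (w : C) : (Cexp w * Cexp (-w))%C = 1%C.
Proof.
  unfold Cexp. destruct w as [x y]. unfold Cmult, Copp; simpl.
  rewrite cos_neg, sin_neg, exp_Ropp.
  pose proof (exp_pos x). pose proof (sin2_cos2 y). unfold Rsqr in *.
  apply injective_projections; simpl; field_simplify; try lra.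
Qed.

Lemma Cconj_R (x : R) : Cconj (RtoC x) = RtoC x.
Proof. unfold Cconj, RtoC; simpl. f_equal. ring. Qed.

Lemma Cconj_Cexp w : Re w = 0 -> Cconj (Cexp w) = Cexp (-w).
Proof.
  destruct w as [x y]; simpl; intros ->. unfold Cexp, Cconj; simpl.
  rewrite Ropp_0, cos_neg, sin_neg. f_equal; ring.
Qed.

Definition W (u v : C * C) : C := (fst u * snd v - fst v * snd u)%C.
Definition Sf (u v : C * C) : C := (snd u * Cconj (snd v) - fst u * Cconj (fst v))%C.

Lemma W_apply M u v : W (mat2_apply M u) (mat2_apply M v) = (mat2_det M * W u v)%C.
Proof. destruct M, u, v; unfold W, mat2_apply, mat2_det; simpl; ring. Qed.

Lemma apply_inv M v : mat2_det M <> 0%C ->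
  mat2_apply M (mat2_apply (mat2_inv M) v) = v.
Proof.
  destruct M as [a b c d], v as [x y]; unfold mat2_apply, mat2_inv, mat2_det; simpl.
  intros H. f_equal; field; auto.
Qed.


Lemma det_L t p k z : 
  mat2_det (Lmat t p k z) = RtoC (qq p k / qq p (k - 1)).
Proof.
  unfold Lmat, mat2_det; simpl.
  set (s := Csqrt z). set (a := qq p (k-1)). set (b := qq p k).
  set (r := b / a).
  set (w1 := (Defs.Ci * t k * (a - b) * s)%C).
  set (w2 := (Defs.Ci * t k * (a + b) * s)%C).
  replace (- Defs.Ci * t k * (a - b) * s)%C with (- w1)%C by (unfold w1; ring).
  replace (- Defs.Ci * t k * (a + b) * s)%C with (- w2)%C by (unfold w2; ring).
  pose proof (Cexp_opp_mul w1). pose proof (Cexp_opp_mul w2).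
  transitivity ((/2 * (1 + r)) * (/2 * (1 + r)) * (Cexp w1 * Cexp (-w1)) - (/2 * (1 - r)) * (/2 * (1 - r)) * (Cexp w2 * Cexp (-w2)))%C.
  { ring. }
  rewrite H, H0. field.
Qed.


Lemma Im_Csqrt lam : 0 < lam -> Im (Csqrt (RtoC lam)) = 0.
Proof.
  intros H. unfold Csqrt; simpl. rewrite Cmod_R, Rabs_pos_eq by lra.
  replace ((lam - lam) / 2) with 0 by field. rewrite sqrt_0. ring.
Qed.

Lemma Re_arg (c d s : C) : Im c = 0 -> Im d = 0 -> Im s = 0 -> Re (Defs.Ci * c * d * s) = 0.
Proof. destruct c, d, s; simpl; intros -> -> ->. ring. Qed.

Lemma Cexp_nz w : Cexp w <> 0%C.
Proof. intro E. pose proof (Cexp_opp_mul w). rewrite E, Cmult_0_l in H.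
  apply (f_equal fst) in H. simpl in H. lra. Qed.

Lemma Copp_inv (w : C) : (- - w)%C = w.
Proof. destruct w; unfold Copp; simpl; f_equal; ring. Qed.

Lemma Re_opp w : Re (- w) = - Re w.
Proof. reflexivity. Qed.

Lemma S_L t p k lam x y : 0 < lam ->
  Sf (mat2_apply (Lmat t p k (RtoC lam)) x) (mat2_apply (Lmat t p k (RtoC lam)) y)
  = (RtoC (qq p k / qq p (k - 1)) * Sf x y)%C.
Proof.
  intros Hl. unfold Lmat, mat2_apply, Sf; simpl.
  pose proof (Im_Csqrt lam Hl) as Hs.
  set (s := Csqrt (RtoC lam)) in *. set (a := qq p (k-1)). set (b := qq p k).
  set (r := b / a).
  set (w1 := (Defs.Ci * t k * (a - b) * s)%C).
  set (w2 := (Defs.Ci * t k * (a + b) * s)%C).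
  replace (- Defs.Ci * t k * (a - b) * s)%C with (- w1)%C by (unfold w1; ring).
  replace (- Defs.Ci * t k * (a + b) * s)%C with (- w2)%C by (unfold w2; ring).
  assert (R1 : Re w1 = 0) by (apply Re_arg; simpl; auto; ring).
  assert (R2 : Re w2 = 0) by (apply Re_arg; simpl; auto; ring).
  assert (R1' : Re (- w1) = 0) by (rewrite Re_opp, R1; ring).
  assert (R2' : Re (- w2) = 0) by (rewrite Re_opp, R2; ring).
  pose proof (Cexp_opp_mul w1) as E1. pose proof (Cexp_opp_mul w2) as E2.
  assert (N1 := Cexp_nz w1). assert (N2 := Cexp_nz w2).
  assert (F1 : Cexp (- w1) = (/ Cexp w1)%C).
  { rewrite <- (Cmult_1_l (/ Cexp w1)%C), <- E1. field. auto. }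
  assert (F2 : Cexp (- w2) = (/ Cexp w2)%C).
  { rewrite <- (Cmult_1_l (/ Cexp w2)%C), <- E2. field. auto. }
  destruct x as [x1 x2], y as [y1 y2]; simpl.
  repeat (rewrite ?Cplus_conj, ?Cminus_conj, ?Cmult_conj).
  rewrite (Cconj_Cexp w1 R1), (Cconj_Cexp w2 R2), (Cconj_Cexp _ R1'), (Cconj_Cexp _ R2').
  rewrite !Copp_inv.
  rewrite !Cinv_conj by (intro E; apply (f_equal fst) in E; simpl in E; lra).
  rewrite !Cconj_R.
  rewrite F1, F2.
  set (c1 := Cconj x1). set (c2 := Cconj x2). set (d1 := Cconj y1). set (d2 := Cconj y2).
  field. auto.
Qed.


Lemma RtoC_nz x : x <> 0 -> RtoC x <> 0%C.
Proof. intros H E. apply H. apply (f_equal fst) in E. exact E. Qed.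

Lemma invariant (q : nat -> R) (n : nat) (f : nat -> C) :
  (forall k, (k <= n)%nat -> q k <> 0) ->
  (forall k, (Datatypes.S k <= n)%nat -> f (Datatypes.S k) = (RtoC (q (Datatypes.S k) / q k) * f k)%C) ->
  forall k, (k <= n)%nat -> (f k / q k = f 0%nat / q 0%nat)%C.
Proof.
  intros Hq Hf k. induction k as [|k IH]; intros Hk; [reflexivity|].
  rewrite Hf by lia. rewrite <- IH by lia.
  assert (H1 := Hq k ltac:(lia)). assert (H2 := Hq (Datatypes.S k) Hk).
  rewrite RtoC_div by auto.
  field. split; apply RtoC_nz; auto.
Qed.

Lemma qq_pos p n : (forall k, (k <= n)%nat -> 0 < p k) ->
  forall k, (k <= n)%nat -> 0 < qq p k.
Proof. intros H k Hk. unfold qq. apply Rinv_0_lt_compat, sqrt_lt_R0, H, Hk. Qed.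

Lemma VP_step t p n z k : (forall k, (k <= n)%nat -> 0 < p k) ->
  (Datatypes.S k <= n)%nat ->
  plus_vec t p n z (n - Datatypes.S k) =
  mat2_apply (Lmat t p (Datatypes.S k) z) (plus_vec t p n z (n - k)).
Proof.
  intros Hp Hk.
  replace (n - k)%nat with (Datatypes.S (n - Datatypes.S k)) by lia.
  cbn [plus_vec].
  replace (n - (n - Datatypes.S k))%nat with (Datatypes.S k) by lia.
  unfold Rmat. rewrite apply_inv; auto.
  rewrite det_L. apply RtoC_nz.
  replace (Datatypes.S k - 1)%nat with k by lia.
  assert (0 < qq p k) by (apply (qq_pos p n); auto; lia).
  assert (0 < qq p (Datatypes.S k)) by (apply (qq_pos p n); auto).
  apply Rgt_not_eq. apply Rdiv_lt_0_compat; auto.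
Qed.

Lemma VM_step t p z k :
  minus_vec t p z (Datatypes.S k) = mat2_apply (Lmat t p (Datatypes.S k) z) (minus_vec t p z k).
Proof. reflexivity. Qed.

Lemma Sf_norm (v : C * C) : Sf v v = RtoC (Cmod (snd v) ^ 2 - Cmod (fst v) ^ 2).
Proof. unfold Sf. rewrite RtoC_minus, !Cmod2_conj. reflexivity. Qed.

Lemma real_of_C (X a b : R) : b <> 0 -> a <> 0 -> (RtoC X / RtoC a = 1 / RtoC b)%C -> b * X = a.
Proof.
  intros Hb Ha H. apply RtoC_inj. rewrite RtoC_mult.
  assert (E : RtoC X = (RtoC X / RtoC a * RtoC a)%C) by (field; apply RtoC_nz; auto).
  rewrite E, H. field. apply RtoC_nz; auto.
Qed.

Theorem lemma3p4 (n : nat) (t p : nat -> R) :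
  (1 <= n)%nat ->
  (forall k, (1 <= k)%nat -> (k < n)%nat -> t k < t (S k)) ->
  (forall k, (k <= n)%nat -> 0 < p k) ->
  let q := qq p in
  let ap := a_plus t p n in
  let bp := b_plus t p n in
  let am := a_minus t p in
  let bm := b_minus t p in
  (* (i) *)
  (forall z : C, not_neg_real z ->
     forall k, (1 <= k)%nat -> (k <= n - 1)%nat ->
       (ap z 0%nat / q 0%nat = (ap z k * bm z k - am z k * bp z k) / q k)%C /\
       ((ap z k * bm z k - am z k * bp z k) / q k = bm z n / q n)%C) /\
  (* (ii) *)
  (forall lam : R, 0 < lam ->
     forall k, (k <= n)%nat ->
       q 0%nat * (Cmod (bm lam k) ^ 2 - Cmod (am lam k) ^ 2) = q k /\
       q n * (Cmod (ap lam k) ^ 2 - Cmod (bp lam k) ^ 2) = q k /\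
       Cmod (ap lam k) ^ 2 / q 0%nat + Cmod (am lam k) ^ 2 / q n =
       Cmod (bp lam k) ^ 2 / q 0%nat + Cmod (bm lam k) ^ 2 / q n) /\
  (* (iii) *)
  (forall lam : R, 0 < lam ->
     forall k, (1 <= k)%nat -> (k <= n - 1)%nat ->
       (bp lam 0%nat / q 0%nat =
          (bp lam k * Cconj (bm lam k) - ap lam k * Cconj (am lam k)) / q k)%C /\
       ((bp lam k * Cconj (bm lam k) - ap lam k * Cconj (am lam k)) / q k =
          - Cconj (am lam n) / q n)%C).
Proof.
  intros Hn Ht Hp q ap bp am bm.
  assert (Hq : forall k, (k <= n)%nat -> q k <> 0).
  { intros k Hk. apply Rgt_not_eq. apply (qq_pos p n); auto. }
  assert (Hqd : forall k, (Datatypes.S k <= n)%nat ->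
            qq p (Datatypes.S k) / qq p (Datatypes.S k - 1) = q (Datatypes.S k) / q k).
  { intros k Hk. replace (Datatypes.S k - 1)%nat with k by lia. reflexivity. }
  assert (Hnn : (n - n = 0)%nat) by lia.
  split; [|split].
  - intros z _ k Hk1 Hk2.
    set (f := fun k => W (plus_vec t p n z (n - k)) (minus_vec t p z k)).
    assert (Hinv := invariant q n f Hq).
    assert (Hs : forall k, (Datatypes.S k <= n)%nat ->
              f (Datatypes.S k) = (RtoC (q (Datatypes.S k) / q k) * f k)%C).
    { intros j Hj. unfold f. rewrite VP_step by auto. rewrite VM_step, W_apply, det_L, Hqd by auto.
      reflexivity. }
    specialize (Hinv Hs).
    change ((ap z k * bm z k - am z k * bp z k))%C with (f k).
    assert (F0 : f 0%nat = ap z 0%nat) by (unfold f, W, ap, a_plus; simpl; ring).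
    assert (Fn : f n = bm z n) by (unfold f, W, bm, b_minus; rewrite Hnn; simpl; ring).
    rewrite <- F0, <- Fn. rewrite (Hinv k) by lia. rewrite (Hinv n) by lia. split; reflexivity.
  - intros lam Hl k Hk.
    set (f1 := fun k => Sf (minus_vec t p (RtoC lam) k) (minus_vec t p (RtoC lam) k)).
    set (f2 := fun k => Sf (plus_vec t p n (RtoC lam) (n - k)) (plus_vec t p n (RtoC lam) (n - k))).
    assert (I1 : forall k, (k <= n)%nat -> (f1 k / q k = f1 0%nat / q 0%nat)%C).
    { apply invariant; auto. intros j Hj. unfold f1. rewrite VM_step, S_L, Hqd by auto. reflexivity. }
    assert (I2 : forall k, (k <= n)%nat -> (f2 k / q k = f2 0%nat / q 0%nat)%C).
    { apply invariant; auto. intros j Hj. unfold f2. rewrite VP_step, S_L, Hqd by auto. reflexivity. }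
    assert (F10 : f1 0%nat = 1%C).
    { unfold f1, Sf; simpl. rewrite !Cconj_R. ring. }
    assert (F2n : f2 n = (-1)%C).
    { unfold f2, Sf; rewrite Hnn; simpl. rewrite !Cconj_R. ring. }
    assert (A1 : q 0%nat * (Cmod (bm lam k) ^ 2 - Cmod (am lam k) ^ 2) = q k).
    { apply real_of_C; auto with arith.
      replace (RtoC (Cmod (bm lam k) ^ 2 - Cmod (am lam k) ^ 2)) with (f1 k)
        by (unfold f1; rewrite Sf_norm; reflexivity).
      rewrite I1, F10 by auto. reflexivity. }
    assert (A2 : q n * (Cmod (ap lam k) ^ 2 - Cmod (bp lam k) ^ 2) = q k).
    { apply real_of_C; auto with arith.
      replace (RtoC (Cmod (ap lam k) ^ 2 - Cmod (bp lam k) ^ 2)) with (- f2 k)%C.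
      2:{ unfold f2. rewrite Sf_norm, RtoC_minus, RtoC_minus. unfold ap, bp, a_plus, b_plus. ring. }
      assert (E : (f2 k / q k = f2 n / q n)%C) by (rewrite (I2 k), (I2 n) by lia; reflexivity).
      rewrite F2n in E.
      assert (RtoC (q k) <> 0%C) by (apply RtoC_nz; auto).
      assert (RtoC (q n) <> 0%C) by (apply RtoC_nz; auto).
      transitivity (- (f2 k / q k))%C. field; auto. rewrite E. field; auto. }
    split; [exact A1|split; [exact A2|]].
    assert (h0 := Hq 0%nat ltac:(lia)). assert (hn := Hq n ltac:(lia)).
    assert (B1 : Cmod (bm lam k) ^ 2 = Cmod (am lam k) ^ 2 + q k / q 0%nat).
    { rewrite <- A1. field. auto. }
    assert (B2 : Cmod (ap lam k) ^ 2 = Cmod (bp lam k) ^ 2 + q k / q n).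
    { rewrite <- A2. field. auto. }
    rewrite B1, B2. field. auto.
  - intros lam Hl k Hk1 Hk2.
    set (f := fun k => Sf (plus_vec t p n (RtoC lam) (n - k)) (minus_vec t p (RtoC lam) k)).
    assert (I : forall k, (k <= n)%nat -> (f k / q k = f 0%nat / q 0%nat)%C).
    { apply invariant; auto. intros j Hj. unfold f. rewrite VP_step, VM_step, S_L, Hqd by auto. reflexivity. }
    change ((bp lam k * Cconj (bm lam k) - ap lam k * Cconj (am lam k)))%C with (f k).
    assert (F0 : f 0%nat = bp lam 0%nat).
    { unfold f, Sf, bp, b_plus; simpl. rewrite !Cconj_R. ring. }
    assert (Fn : f n = (- Cconj (am lam n))%C).
    { unfold f, Sf, am, a_minus; rewrite Hnn; simpl. ring. }
    rewrite <- F0, <- Fn. rewrite (I k) by lia. rewrite (I n) by lia. split; reflexivity.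
Qed.
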